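(* Let $P'$ be a finite totally ordered subset of $\mathbb{Q}$ with minimum $0$ and maximum $n$ that contains $\{0,1,\dots,n\}$, and let $L'=P'\times P'$, $L_n=\{0,\dots,n\}^2$ (product orders). Let $g:L_n\to L'$ be the inclusion and $f:L'\to L_n$, $f(a_1,a_2)=(\lceil a_1\rceil,\lceil a_2\rceil)$. Let $F:L'\to\Delta K$ and $G:L_n\to\Delta K$ be filtrations with $G=F\circ g$. Then for any $x\le y$ in $L_n$ and every dimension $q$, \[\mathsf{Dgm}_qG[x,y]=\sum_{[a,b]\in\mathsf{Int}\,L',\ f(a)=x,\ f(b)=y}\mathsf{Dgm}_qF[a,b].\]
   Context: $K$ is a finite simplicial complex, coefficients in a field; $\Delta K$ is the poset of subcomplexes of $K$. For a finite poset $P$ with least element $\bot$ and greatest $\top$: $\mathsf{Int}\,P=\{[a,b]:a\le b\}$ with $[a,b]\le[c,d]$ iff $a\le c$, $b\le d$; a $P$-filtration is a monotone map $F:P\to\Delta K$ with $F(\bot)=\emptyset$, $F(\top)=K$; $ZB_qF[a,b]=\dim(Z_qF(a)\cap B_qF(b))$ for $b\ne\top$ and $\dim Z_qF(a)$ for $b=\top$ ($Z_q,B_q$ = $q$-cycles, $q$-boundaries); $\mathsf{Dgm}_qF$ is the unique function on $\mathsf{Int}\,P$ with $ZB_qF[c,d]=\sum_{[a,b]\le[c,d]}\mathsf{Dgm}_qF[a,b]$. *)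

(* Defs.v *)
From HB Require Import structures.
From mathcomp Require Import all_boot all_order all_algebra.
Set Implicit Arguments. Unset Strict Implicit. Unset Printing Implicit Defensive.
Import Order.TTheory GRing.Theory Num.Theory.
Local Open Scope ring_scope.

Definition is_complex (V : finType) (K : {set {set V}}) : Prop :=
  set0 \notin K /\
  (forall s t : {set V}, s \in K -> t \subset s -> t != set0 -> t \in K).

Definition is_subcomplex (V : finType) (K L : {set {set V}}) : Prop :=
  is_complex L /\ L \subset K.

Definition qsimp (V : finType) (L : {set {set V}}) (q : nat) : {set {set V}} :=
  [set s in L | #|s| == q.+1].

Section Chains.
Variables (k : fieldType) (V : finType).

(* chains: k-valued functions on all subsets of V (chains of L are those
   supported on simplices of L) *)
Definition chain := {ffun {set V} -> k^o}.

Definition chain_basis (s : {set V}) : chain := [ffun t => (t == s)%:R].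

(* position of vertex v in the (ordered) simplex s; vertices are ordered
   by enum_rank, which fixes the orientation of simplices *)
Definition vpos (v : V) (s : {set V}) : nat :=
  #|[set u in s | (enum_rank u < enum_rank v)%N]|.

(* simplicial boundary: d(s) = sum_i (-1)^i (s minus its i-th vertex),
   and d = 0 on 0-simplices (non-augmented) *)
Definition bd_fun (c : chain) : chain :=
  [ffun t => \sum_(s : {set V}) \sum_(v in s | (1 < #|s|)%N && (s :\ v == t))
               (-1) ^+ vpos v s * c s].

Definition bd : 'End(chain) := linfun bd_fun.

Definition chain_span (S : {set {set V}}) : {vspace chain} :=
  <<[seq chain_basis s | s <- enum S]>>%VS.

Definition Zq (L : {set {set V}}) (q : nat) : {vspace chain} :=
  (lker bd :&: chain_span (qsimp L q))%VS.

Definition Bq (L : {set {set V}}) (q : nat) : {vspace chain} :=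
  (bd @: chain_span (qsimp L q.+1))%VS.

End Chains.

Definition is_filtration (V : finType) (K : {set {set V}})
  (T : finType) (le : rel T) (bot top : T) (F : T -> {set {set V}}) : Prop :=
  [/\ forall a, is_subcomplex K (F a),
      forall a b, le a b -> F a \subset F b,
      F bot = set0 & F top = K].

Definition ZB (k : fieldType) (V : finType) (T : finType) (top : T)
  (F : T -> {set {set V}}) (q : nat) (a b : T) : nat :=
  if b == top then \dim (Zq k (F a) q)
  else \dim (Zq k (F a) q :&: Bq k (F b) q)%VS.

(* D is the persistence diagram Dgm_q F : Int P -> Z, i.e. (the unique
   function on intervals [a,b], a <= b) satisfying
   ZB_q F[c,d] = sum_{[a,b] <= [c,d]} D[a,b]  for all [c,d] in Int P. *)
Definition is_Dgm (k : fieldType) (V : finType) (T : finType) (le : rel T)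
  (top : T) (F : T -> {set {set V}}) (q : nat) (D : T -> T -> int) : Prop :=
  forall c d, le c d ->
    ((ZB k top F q c d)%:Z =
       \sum_(a : T) \sum_(b : T | [&& le a b, le a c & le b d]) D a b)%R.

Definition Lp (P : seq rat) := (seq_sub P * seq_sub P)%type.
Definition lep (P : seq rat) : rel (Lp P) :=
  fun a b => (ssval a.1 <= ssval b.1) && (ssval a.2 <= ssval b.2).

Definition Ln (n : nat) := ('I_n.+1 * 'I_n.+1)%type.
Definition len (n : nat) : rel (Ln n) :=
  fun x y => (x.1 <= y.1)%N && (x.2 <= y.2)%N.
Definition botn (n : nat) : Ln n := (ord0, ord0).
Definition topn (n : nat) : Ln n := (ord_max, ord_max).

(* f(a1,a2) = (ceil a1, ceil a2) == x, compared as integers *)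
Definition f_eq (P : seq rat) (n : nat) (a : Lp P) (x : Ln n) : bool :=
  (Num.ceil (ssval a.1) == (x.1 : nat)%:Z) && (Num.ceil (ssval a.2) == (x.2 : nat)%:Z).

(* Main.v *)
Require Import Defs.
From HB Require Import structures.
From mathcomp Require Import all_boot all_order all_algebra zify.
Import Order.TTheory GRing.Theory Num.Theory.
Local Open Scope ring_scope.

Section S.
Variables (n : nat) (P : seq rat).
Hypothesis (HPb : forall x, x \in P -> 0 <= x <= n%:R).

Definition cf (r : rat) : nat := `|Num.ceil r|%N.

Lemma cfE (r : seq_sub P) : ((cf (ssval r))%:Z = Num.ceil (ssval r)) /\ (cf (ssval r) <= n)%N.
Proof.
have /andP[h0 hn] := HPb _ (ssvalP r).
have c0 : 0 <= Num.ceil (ssval r) by rewrite Num.Theory.ceil_ge0 (lt_le_trans _ h0).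
rewrite /cf gez0_abs //; split=> //.
rewrite -lez_nat gez0_abs // Num.Theory.ceil_le_int.
by rewrite -[X in _ <= X]pmulrn.
Qed.

Lemma cf_le (r : seq_sub P) (c : nat) : (cf (ssval r) <= c)%N = (ssval r <= c%:R).
Proof.
have [e _] := cfE r.
by rewrite -lez_nat e Num.Theory.ceil_le_int -[X in _ <= X]pmulrn.
Qed.

Definition fm (a : Lp P) : Ln n := (inord (cf (ssval a.1)), inord (cf (ssval a.2))).

Lemma fmE1 (a : Lp P) : ((fm a).1 : nat) = cf (ssval a.1).
Proof. by rewrite /= inordK // ltnS; case: (cfE a.1). Qed.
Lemma fmE2 (a : Lp P) : ((fm a).2 : nat) = cf (ssval a.2).
Proof. by rewrite /= inordK // ltnS; case: (cfE a.2). Qed.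

Lemma f_eqE (a : Lp P) (x : Ln n) : f_eq a x = (fm a == x).
Proof.
destruct x as [x1 x2].
rewrite /f_eq /= (surjective_pairing (fm a)) xpair_eqE -!val_eqE /= fmE1 fmE2.
case: (cfE a.1) => e1 _; case: (cfE a.2) => e2 _.
by rewrite -e1 -e2.
Qed.
End S.
Arguments fm n {P} a.
Arguments cfE {n P} HPb r.
Arguments cf_le {n P} HPb r c.
Arguments fmE1 {n P} HPb a.
Arguments fmE2 {n P} HPb a.
Arguments f_eqE {n P} HPb a x.

Definition msr {n : nat} (c d : Ln n) : nat := (c.1 + c.2 + d.1 + d.2)%N.

Lemma uniq_dgm (n : nat) (E E' : Ln n -> Ln n -> int) :
  (forall c d, len c d ->
     \sum_(a : Ln n) \sum_(b : Ln n | [&& len a b, len a c & len b d]) E a b =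
     \sum_(a : Ln n) \sum_(b : Ln n | [&& len a b, len a c & len b d]) E' a b) ->
  forall c d, len c d -> E c d = E' c d.
Proof.
move=> HE.
have Hs : forall c d, len c d ->
  \sum_(p : Ln n * Ln n | [&& len p.1 p.2, len p.1 c & len p.2 d]) (E p.1 p.2 - E' p.1 p.2) = 0.
  move=> c d cd; rewrite -(pair_big_dep xpredT (fun a b => [&& len a b, len a c & len b d])
     (fun a b => E a b - E' a b)) /=.
  under eq_bigr => a _ do rewrite sumrB.
  by rewrite sumrB HE // subrr.
suff H : forall (m : nat) (c d : Ln n), (msr c d <= m)%N -> len c d -> E c d - E' c d = 0.
  by move=> c d cd; apply/eqP; rewrite -subr_eq0; apply/eqP; exact: (H _ c d (leqnn _) cd).
elim=> [|m IH] c d hm cd.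
- have := Hs c d cd; rewrite (bigD1 (c, d)) /=; last by rewrite cd /len !leqnn.
  rewrite big1 ?addr0 // => -[a b] /= /andP[/and3P[_ ac bd] ne].
  exfalso; move: ne; move: ac bd hm; rewrite /len /msr.
  case: a => a1 a2; case: b => b1 b2; case: c {cd} => c1 c2; case: d => d1 d2 /=.
  move=> /andP[h1 h2] /andP[h3 h4] hm.
  move=> /negP; apply; rewrite !xpair_eqE; apply/and3P; split; [apply/andP; split|..]; apply/eqP; apply: val_inj => /=; lia.
- have := Hs c d cd; rewrite (bigD1 (c, d)) /=; last by rewrite cd /len !leqnn.
  rewrite big1 ?addr0 // => -[a b] /= /andP[/and3P[ab ac bd] ne].
  case: (ltnP (msr a b) (msr c d)) => hlt.
    by apply: IH => //; rewrite -ltnS (leq_trans hlt hm).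
  exfalso; move: ne ac bd hlt; rewrite /len /msr.
  case: a {ab} => a1 a2; case: b => b1 b2; case: c {cd hm} => c1 c2; case: d => d1 d2 /=.
  move=> + /andP[h1 h2] /andP[h3 h4] hm.
  move=> /negP; apply; rewrite !xpair_eqE; apply/and3P; split; [apply/andP; split|..]; apply/eqP; apply: val_inj => /=; lia.
Qed.

Lemma lep_fm (n : nat) (P : seq rat) (HPb : forall x, x \in P -> 0 <= x <= n%:R)
  (a g : Lp P) (c : Ln n) :
  ssval g.1 = (c.1 : nat)%:R -> ssval g.2 = (c.2 : nat)%:R ->
  lep a g = len (fm n a) c.
Proof.
by move=> h1 h2; rewrite /lep /len h1 h2 (fmE1 HPb) (fmE2 HPb) !(cf_le HPb).
Qed.

Lemma lep_mono (n : nat) (P : seq rat) (HPb : forall x, x \in P -> 0 <= x <= n%:R)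
  (a b : Lp P) : lep a b -> len (fm n a) (fm n b).
Proof.
rewrite /lep /len (fmE1 HPb) (fmE2 HPb) (fmE1 HPb) (fmE2 HPb) => /andP[h1 h2].
case: (cfE HPb a.1) => e1 _; case: (cfE HPb a.2) => e2 _.
case: (cfE HPb b.1) => e3 _; case: (cfE HPb b.2) => e4 _.
by rewrite -!lez_nat e1 e2 e3 e4 !Num.Theory.le_ceil.
Qed.

Arguments lep_fm {n P} HPb a g c.
Arguments lep_mono {n P} HPb a b.

Theorem mainTheorem8
  (k : fieldType) (V : finType) (K : {set {set V}}) (HK : is_complex K)
  (n : nat) (P : seq rat)
  (HP0 : 0 \in P) (HPn : n%:R \in P)
  (HPb : forall x, x \in P -> 0 <= x <= n%:R)
  (HPint : forall i : nat, (i <= n)%N -> i%:R \in P)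
  (botp topp : Lp P)
  (Hbot : ssval botp.1 = 0 /\ ssval botp.2 = 0)
  (Htop : ssval topp.1 = n%:R /\ ssval topp.2 = n%:R)
  (F : Lp P -> {set {set V}}) (G : Ln n -> {set {set V}})
  (HF : is_filtration K (@lep P) botp topp F)
  (HG : is_filtration K (@len n) (botn n) (topn n) G)
  (HGF : forall (x : Ln n) (a : Lp P),
      ssval a.1 = (x.1 : nat)%:R -> ssval a.2 = (x.2 : nat)%:R -> G x = F a)
  (q : nat) (DF : Lp P -> Lp P -> int) (DG : Ln n -> Ln n -> int)
  (HDF : is_Dgm k (@lep P) topp F q DF)
  (HDG : is_Dgm k (@len n) (topn n) G q DG)
  (x y : Ln n) (Hxy : len x y) :
  DG x y = \sum_(a : Lp P) \sum_(b : Lp P | [&& lep a b, f_eq a x & f_eq b y]) DF a b.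
Proof.
pose D' (x y : Ln n) := \sum_(a : Lp P) \sum_(b : Lp P | [&& lep a b, f_eq a x & f_eq b y]) DF a b.
apply: (@uniq_dgm n DG D') Hxy => c d cd.
have gex : forall c : Ln n, exists g : Lp P,
    ssval g.1 = (c.1 : nat)%:R /\ ssval g.2 = (c.2 : nat)%:R.
  move=> [c1 c2].
  exists (SeqSub (HPint c1 (ltn_ord c1 : (c1 <= n)%N)),
          SeqSub (HPint c2 (ltn_ord c2 : (c2 <= n)%N))) => //.
have [gc [gc1 gc2]] := gex c.
have [gd [gd1 gd2]] := gex d.
have htop : (gd == topp) = (d == topn n).
  rewrite (surjective_pairing gd) (surjective_pairing topp) /topn (surjective_pairing d).
  by rewrite !xpair_eqE -!val_eqE /= gd1 gd2 Htop.1 Htop.2 !val_eqE !eqr_nat.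
have gcd : lep gc gd.
  by rewrite /lep gc1 gc2 gd1 gd2 !ler_nat.
rewrite -HDG //.
have -> : ZB k (topn n) G q c d = ZB k topp F q gc gd.
  by rewrite /ZB htop (HGF c gc) // (HGF d gd).
rewrite HDF //.
rewrite /D'.
rewrite (pair_big_dep xpredT (fun a b => [&& lep a b, lep a gc & lep b gd])
   (fun a b => DF a b)) /=.
rewrite (pair_big_dep xpredT (fun x y => [&& len x y, len x c & len y d])) /=.
rewrite (partition_big (fun r : Lp P * Lp P => (fm n r.1, fm n r.2))
   (fun j : Ln n * Ln n => [&& len j.1 j.2, len j.1 c & len j.2 d])) /=; last first.
  move=> [a b] /= /and3P[ab ac bd].
  by rewrite (lep_mono HPb _ _ ab) -(lep_fm HPb _ _ _ gc1 gc2) ac -(lep_fm HPb _ _ _ gd1 gd2) bd.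
apply: eq_bigr => [[j1 j2]] /= /and3P[j12 j1c j2d].
rewrite (pair_big_dep xpredT (fun a b => [&& lep a b, f_eq a j1 & f_eq b j2])) /=.
apply: eq_bigl => -[a b] /=.
rewrite !(f_eqE HPb) xpair_eqE (lep_fm HPb _ _ _ gc1 gc2) (lep_fm HPb _ _ _ gd1 gd2).
by case: eqP => [->|]; case: eqP => [->|]; rewrite ?andbF ?andbT //= ?j1c ?j2d ?andbT.
Qed.
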